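(* Let $k\ge1$, $r=\sqrt[k]{p}$. On recursion level $t$ ($1\le t\le k$) of multi-level MS using character-based regular sampling with sampling factor $v>0$, each bucket contains at most $$\|B^j\|\le\Bigl(1+\frac{r}{v}\Bigr)^t\Bigl(\frac{N}{r^t}+t\Bigl(1+\frac{v+1}{r}\Bigr)\frac{p}{r^{t-1}}\hat{\ell}\Bigr)$$ characters.
   Context: $p$ PEs hold strings with $N$ characters in total; $\hat{\ell}$ is the length of the longest string; $\|X\|$ denotes the number of characters of a set of strings $X$. Multi-level MS (with $p=r^k$): each PE sorts its local strings; then on each level $t=1,\dots,k$ the PEs form $r^{t-1}$ groups of $p'=r^{k+1-t}$ consecutive PEs, each group independently sorting the concatenation $S'$ of its PEs' locally sorted arrays $S_i$ (on level $t>1$ the strings of a group are exactly one bucket of the previous level): $r-1$ splitters $f_1<\dots<f_{r-1}$ are chosen, bucket $B^j=\bigcup_i\{s\in S_i:f_j<s\le f_{j+1}\}$ ($f_0=-\infty,f_r=\infty$) goes to the $j$-th subgroup of $p'/r$ PEs, and received sequences are merged. Character-based regular sampling with factor $v$: with $\omega'=\|S'\|/(p'(v+1))$, PE $i$ draws $\lceil\|S_i\|/\omega'\rceil-1$ equally spaced positions in its local character array (concatenation of its strings), each position is shifted (by at most $\hat{\ell}-1$) to the beginning of the string containing it, and these strings are the samples; if fewer than $p'(v+1)$ samples result, the first PEs draw one additional sample each. The samples $V$ are sorted globally and $f_j=V[j|V|/r-1]$ for $0<j<r$. *)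

(* Defs.v *)
From mathcomp Require Import all_boot all_order all_algebra.
Import Order.TTheory GRing.Theory Num.Theory.
Set Implicit Arguments. Unset Strict Implicit. Unset Printing Implicit Defensive.

Definition string := seq nat.
Definition str_le (s t : string) : bool := ((s : seqlexi nat) <= (t : seqlexi nat))%O.
Definition str_lt (s t : string) : bool := ((s : seqlexi nat) < (t : seqlexi nat))%O.

Definition nchars (X : seq string) : nat := sumn (map size X).

(* The string of the (locally sorted) array [Si] that contains character
   position [x] of the concatenation of the strings of [Si]
   (i.e. [x] shifted to the beginning of the string containing it). *)
Local Open Scope ring_scope.
Fixpoint str_at (Si : seq string) (x : rat) : string :=
  match Si with
  | [::] => [::]%N
  | s :: rest => if x < (size s)%:R then s else str_at rest (x - (size s)%:R)
  end.

Section Sampling.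
(* A group is given by the sequence [S] of the locally sorted arrays S_i of
   its p' = size S PEs. *)
Variable v : nat.

Definition omega (S : seq (seq string)) : rat :=
  (nchars (flatten S))%:R / ((size S * v.+1)%N)%:R.

Definition ncuts (S : seq (seq string)) (Si : seq string) : nat :=
  `|Num.ceil ((nchars Si)%:R / omega S)|%N.

Definition reg_samples (S : seq (seq string)) (Si : seq string) : seq string :=
  let c := ncuts S Si in
  [seq str_at Si ((nchars Si)%:R * m%:R / c%:R) | m <- iota 1 c.-1].

Definition deficit (S : seq (seq string)) : nat :=
  ((size S * v.+1) - sumn [seq size (reg_samples S Si) | Si <- S])%N.

(* The first [deficit S] PEs draw one additional sample each; which string
   of its local array the additional sample is, is left arbitrary (given by
   [e i]); a PE without any string cannot draw a sample. *)
Definition extra_ok (S : seq (seq string)) (e : nat -> string) : Prop :=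
  forall i, (i < size S)%N -> nth [::] S i != [::] -> e i \in nth [::] S i.

Definition samples (S : seq (seq string)) (e : nat -> string) : seq string :=
  flatten [seq reg_samples S (nth [::] S i) ++
              (if (i < deficit S)%N && (nth [::] S i != [::]) then [:: e i] else [::])
          | i <- iota 0 (size S)].

Variable r : nat.

Definition splitter (S : seq (seq string)) (e : nat -> string) (j : nat) : string :=
  let V := sort str_le (samples S e) in
  nth [::] V ((j * size V) %/ r).-1.

Definition bucket (S : seq (seq string)) (e : nat -> string) (j : nat) : seq string :=
  [seq s <- flatten S |
    ((j == 0)%N || str_lt (splitter S e j) s) &&
    ((j.+1 == r)%N || str_le s (splitter S e j.+1))].

(* Groups occurring on level t of multi-level MS (k levels) on input [inp]:
   level 1 is one group of all PEs, each having sorted its local strings;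
   a group of level t+1 (t < k) consists of size S / r PEs that receive
   bucket j of a level-t group S (distributed arbitrarily among them), each
   merging what it receives into a sorted local array. *)
Inductive mlevel_group (k : nat) (inp : seq (seq string)) :
    nat -> seq (seq string) -> Prop :=
  | mlg_first : mlevel_group k inp 1 [seq sort str_le s | s <- inp]
  | mlg_next t S e j C :
      mlevel_group k inp t S -> (t < k)%N -> extra_ok S e -> (j < r)%N ->
      size C = (size S %/ r)%N -> all (sorted str_le) C ->
      perm_eq (flatten C) (bucket S e j) ->
      mlevel_group k inp t.+1 C.

End Sampling.

(* Main.v *)
Require Import Defs.
From mathcomp Require Import all_boot all_order all_algebra.
Import Order.TTheory GRing.Theory Num.Theory.
From mathcomp Require Import zify ring lra.
Set Implicit Arguments. Unset Strict Implicit. Unset Printing Implicit Defensive.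


Lemma str_le_trans : transitive str_le.
Proof. move=> y x z; rewrite /str_le; exact: le_trans. Qed.
Lemma str_le_refl : reflexive str_le.
Proof. move=> x; rewrite /str_le; exact: lexx. Qed.
Lemma str_le_total : total str_le.
Proof. move=> x y; rewrite /str_le; exact: le_total. Qed.
Lemma str_ltNge s t : str_lt s t = ~~ str_le t s.
Proof. by rewrite /str_lt /str_le ltNge. Qed.
Lemma str_le_eqVlt s t : str_le s t = (s == t) || str_lt s t.
Proof. by rewrite /str_lt /str_le le_eqVlt. Qed.
Lemma str_lt_le_trans x y z : str_lt x y -> str_le y z -> str_lt x z.
Proof. rewrite /str_lt /str_le; exact: lt_le_trans. Qed.
Lemma str_le_lt_trans x y z : str_le x y -> str_lt y z -> str_lt x z.
Proof. rewrite /str_lt /str_le; exact: le_lt_trans. Qed.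

Lemma nchars_cat a b : nchars (a ++ b) = (nchars a + nchars b)%N.
Proof. by rewrite /nchars map_cat sumn_cat. Qed.
Lemma nchars_cons s a : nchars (s :: a) = (size s + nchars a)%N.
Proof. by []. Qed.

Lemma nchars_filter_flatten (P : pred string) L :
  nchars (filter P (flatten L)) = sumn (map (fun X => nchars (filter P X)) L).
Proof. elim: L => [|X L IH] //=; by rewrite filter_cat nchars_cat IH. Qed.

Lemma nchars_filter_sub (a b : pred string) X :
  (forall s, a s -> b s) -> (nchars (filter a X) <= nchars (filter b X))%N.
Proof.
move=> ab; elim: X => [|s X IH] //=.
case: (boolP (a s)) => [/ab -> | _]; first by rewrite !nchars_cons leq_add2l.
case: (b s) => //; rewrite nchars_cons; exact: leq_trans IH (leq_addl _ _).
Qed.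

Lemma nchars_filter_or (a b : pred string) X :
  (nchars (filter (fun s => a s || b s) X) <= nchars (filter a X) + nchars (filter b X))%N.
Proof.
elim: X => [|s X IH] //=.
case: (a s); case: (b s) => /=; rewrite ?nchars_cons; lia.
Qed.

Lemma nchars_filter_le (a : pred string) X : (nchars (filter a X) <= nchars X)%N.
Proof. elim: X => [|s X IH] //=; case: (a s); rewrite ?nchars_cons; lia. Qed.

Lemma nchars_perm X Y : perm_eq X Y -> nchars X = nchars Y.
Proof. move=> pXY; rewrite /nchars; apply: perm_sumn; exact: perm_map. Qed.

Lemma convex_split (P : pred string) (s : seq string) :
  sorted str_le s ->
  (forall x y z, P x -> P z -> str_le x y -> str_le y z -> P y) ->
  exists X Y Z, [/\ s = X ++ Y ++ Z, all P Y, ~~ has P X & ~~ has P Z].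
Proof.
move=> + cvx; elim: s => [|a s IH] srt.
  by exists [::], [::], [::].
have srt' : sorted str_le s := path_sorted srt.
have amin : forall x, x \in s -> str_le a x.
  move=> x xs; have := order_path_min str_le_trans srt.
  by move/allP; apply.
have [X [Y [Z [Es aY nX nZ]]]] := IH srt'.
clear IH; subst s.
case: (boolP (P a)) => Pa; last first.
  by exists (a :: X), Y, Z; split => //=; rewrite negb_or Pa.
case: X nX amin srt' srt => [|x X] nX amin srt' srt.
  by exists [::], (a :: Y), Z; split => //=; rewrite Pa.
case: Y aY amin srt' srt => [|y Y] aY amin srt' srt.
  exists [::], [:: a], (x :: X ++ Z); split => //=; first by rewrite Pa.
  by move: nX nZ => /=; rewrite has_cat; case: (P x); case: (has P X); case: (has P Z).
exfalso.
have Py : P y by move: aY => /= /andP[].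
have Px : P x.
  apply: (cvx a x y) => //; first by apply: amin; rewrite mem_cat inE eqxx.
  have := order_path_min str_le_trans srt'; move/allP; apply.
  by rewrite mem_cat /= inE eqxx orbT.
by move: nX => /=; rewrite Px.
Qed.

Local Open Scope ring_scope.

Lemma str_at_cat X W (x : rat) : (nchars X)%:R <= x ->
  str_at (X ++ W) x = str_at W (x - (nchars X)%:R).
Proof.
elim: X x => [|s X IH] x /=; first by rewrite subr0.
rewrite nchars_cons natrD => hx.
have -> : (x < (size s)%:R) = false.
  apply/negbTE; rewrite -leNgt; apply: le_trans hx; rewrite lerDl; exact: ler0n.
rewrite IH; first by congr str_at; lra.
lra.
Qed.

Lemma str_at_in Y W (y : rat) : 0 <= y -> y < (nchars Y)%:R ->
  str_at (Y ++ W) y \in Y.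
Proof.
elim: Y y => [|s Y IH] y /=; first by move=> ? ; rewrite /nchars /= => ?; lra.
rewrite nchars_cons natrD => y0 hy.
case: ifP => hs; first by rewrite inE eqxx.
move/negbT: hs; rewrite -leNgt => hs.
rewrite inE IH ?orbT //. all: lra.
Qed.

Local Close Scope ring_scope.

Lemma count_mult T n X Y : 0 < T -> Y <= T * n ->
  Y <= X + T * count (fun m => (X <= T * m) && (T * m < Y)) (iota 0 n) + (if X == 0 then 0 else T).
Proof.
move=> T0; elim: n Y => [|n IH] Y hY.
  by move: hY; rewrite muln0 leqn0 => /eqP ->.
case: (leqP Y (T * n)) => hYn.
  have := IH _ hYn.
  rewrite -addn1 iotaD count_cat /= add0n.
  set c := count _ _; move=> h; apply: leq_trans h _.
  rewrite -!addnA leq_add2l leq_add2r leq_mul2l; apply/orP; right.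
  exact: leq_addr.
case: (leqP X (T * n)) => hX.
  have := IH (T * n) (leqnn _).
  have hc : count (fun m => (X <= T * m) && (T * m < T * n)) (iota 0 n) <=
            count (fun m => (X <= T * m) && (T * m < Y)) (iota 0 n).
    apply: sub_count => m /andP[-> /= h]; exact: ltn_trans h hYn.
  rewrite -addn1 iotaD count_cat /= add0n hX hYn /=.
  move: hY; rewrite mulnSr => hY.
  have := leq_mul2l T (count (fun m => (X <= T * m) && (T * m < T * n)) (iota 0 n))
            (count (fun m => (X <= T * m) && (T * m < Y)) (iota 0 n)).
  rewrite hc orbT => /idP hc'.
  nia.
have Xp : X != 0 by apply/eqP => X0; move: hX; rewrite X0.
rewrite (negbTE Xp); move: hY; rewrite mulnSr => hY; lia.
Qed.

Lemma count_mult1 T c X Y : 0 < T -> 0 < c -> Y <= T * c -> X <= Y ->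
  Y - X <= T * (count (fun m => (X <= T * m) && (T * m < Y)) (iota 1 c.-1) + 1).
Proof.
move=> T0 c0 hY hXY; have := count_mult X T0 hY.
case: c c0 hY => [|c] // _ hY /=.
set cnt := count _ _.
case: eqP => [X0|/eqP Xn]; rewrite ?X0 /=.
  case: (0 < Y); rewrite /=; nia.
have -> : (X <= T * 0) = false by rewrite muln0; lia.
rewrite /=; nia.
Qed.

Local Open Scope ring_scope.

Lemma pe_bound (P : pred string) Si c (w : rat) :
  sorted str_le Si -> (forall x y z, P x -> P z -> str_le x y -> str_le y z -> P y) ->
  (0 < c)%N -> (nchars Si)%:R / c%:R <= w ->
  (nchars (filter P Si))%:R <=
    w * ((count P [seq str_at Si ((nchars Si)%:R * m%:R / c%:R) | m <- iota 1 c.-1])%:R + 1).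
Proof.
move=> srt cvx c0 hw.
have [X [Y [Z [E aY nX nZ]]]] := convex_split srt cvx.
have fE : filter P Si = Y.
  rewrite E !filter_cat; move: nX nZ; rewrite !has_filter !negbK => /eqP -> /eqP ->.
  by rewrite cats0 /=; apply/all_filterP.
rewrite fE.
have c0' : (0 : rat) < c%:R by rewrite ltr0n.
have w0 : 0 <= w by apply: le_trans hw; apply: divr_ge0; apply: ler0n.
set T := nchars Si.
have TE : T = (nchars X + nchars Y + nchars Z)%N by rewrite /T E !nchars_cat addnA.
have cnt0 : (0 : rat) <= (count P [seq str_at Si (T%:R * m%:R / c%:R) | m <- iota 1 c.-1])%:R + 1.
  by apply: addr_ge0 => //; apply: ler0n.
case: (posnP T) => [T0 | Tp].
  have -> : nchars Y = 0%N by move: TE; rewrite T0; lia.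
  by rewrite mulr_ge0.
set A := nchars X; set L := nchars Y.
have key := @count_mult1 T c (A * c) ((A + L) * c) Tp c0.
have := key (ltac:(rewrite TE; nia)) (ltac:(nia)).
set cnt := count _ _ => hk.
have hcnt : (cnt <= count P [seq str_at Si (T%:R * m%:R / c%:R) | m <- iota 1 c.-1])%N.
  rewrite count_map; apply: sub_count => m /andP[h1 h2] /=.
  have h1' : A%:R <= T%:R * m%:R / c%:R :> rat.
    by rewrite ler_pdivlMr // -!natrM ler_nat.
  have h2' : T%:R * m%:R / c%:R < (A + L)%:R :> rat.
    by rewrite ltr_pdivrMr // -!natrM ltr_nat.
  rewrite E str_at_cat //; apply: (allP aY); apply: str_at_in.
    by rewrite subr_ge0.
  by move: h2'; rewrite natrD; lra.
have hL : (L * c <= T * (cnt + 1))%N by move: hk; rewrite mulnDl; lia.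
apply: (@le_trans _ _ (T%:R / c%:R * (cnt%:R + 1))).
  have -> : (cnt%:R + 1 : rat) = (cnt + 1)%N%:R by rewrite natrD.
  rewrite mulrAC ler_pdivlMr // -!natrM ler_nat; lia.
apply: ler_pM => //; first by apply: divr_ge0; apply: ler0n.
  by apply: addr_ge0 => //; apply: ler0n.
by rewrite lerD2r ler_nat.
Qed.

Local Open Scope ring_scope.

Lemma omega_ge0 v S : 0 <= omega v S.
Proof. by apply: divr_ge0; apply: ler0n. Qed.

Lemma ncuts_props v S Si :
  ((ncuts v S Si).-1)%:R <= (nchars Si)%:R / omega v S :> rat /\
  (nchars Si)%:R / omega v S <= (ncuts v S Si)%:R :> rat.
Proof.
set x := (nchars Si)%:R / omega v S.
have x0 : 0 <= x by apply: divr_ge0; [apply: ler0n | apply: omega_ge0].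
have cE : ((ncuts v S Si)%:R : rat) = (Num.ceil x)%:~R.
  rewrite /ncuts -/x natr_absz ger0_norm //; rewrite ceil_ge0; lra.
split; last by rewrite cE; apply: ceil_ge.
case: (ncuts v S Si) cE => [|c] cE /=; first by [].
have := ceilB1_lt x; rewrite rmorphB /= -cE rmorph1 -natr1 => h.
apply/ltW; lra.
Qed.

Lemma sumn_le_big (T : eqType) (f : T -> nat) (g : T -> rat) (L : seq T) :
  (forall x, x \in L -> (f x)%:R <= g x) -> (sumn (map f L))%:R <= \sum_(x <- L) g x.
Proof.
elim: L => [|y L IH] H /=; first by rewrite big_nil.
rewrite big_cons natrD; apply: lerD; first by apply: H; rewrite inE eqxx.
by apply: IH => x xL; apply: H; rewrite inE xL orbT.
Qed.

Lemma nchars_flatten L : nchars (flatten L) = sumn (map nchars L).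
Proof. by elim: L => [|X L IH] //=; rewrite nchars_cat IH. Qed.

Local Close Scope ring_scope.
Lemma sumn_mapD T (f g : T -> nat) L :
  sumn (map (fun x => f x + g x)%N L) = (sumn (map f L) + sumn (map g L))%N.
Proof. elim: L => [|x L IH] //=; rewrite IH; lia. Qed.

Lemma sumn_map_le T (f g : T -> nat) L :
  (forall x, f x <= g x)%N -> (sumn (map f L) <= sumn (map g L))%N.
Proof. move=> H; elim: L => [|x L IH] //=; exact: leq_add. Qed.

Lemma count_lt_iota d n : (count (fun i => i < d) (iota 0 n) <= d)%N.
Proof.
rewrite -size_filter; apply: (@leq_trans (size (iota 0 d))); last by rewrite size_iota.
apply: uniq_leq_size.
  by apply: filter_uniq; apply: iota_uniq.
by move=> i; rewrite mem_filter !mem_iota /= => /andP[->].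
Qed.

Local Open Scope ring_scope.
Lemma map_iota_nth (T U : Type) (x0 : T) (f : T -> U) s :
  [seq f (nth x0 s i) | i <- iota 0 (size s)] = map f s.
Proof.
have := mkseq_nth x0 s; rewrite /mkseq => E.
by rewrite -[in RHS]E -map_comp.
Qed.

Lemma reg_size v S Si : size (reg_samples v S Si) = (ncuts v S Si).-1.
Proof. by rewrite /reg_samples size_map size_iota. Qed.

Lemma R_le v S : (sumn [seq size (reg_samples v S Si) | Si <- S] <= size S * v.+1)%N.
Proof.
rewrite -(ler_nat rat).
apply: le_trans (_ : \sum_(Si <- S) (nchars Si)%:R / omega v S <= _).
  apply: sumn_le_big => Si _; rewrite reg_size; exact: (ncuts_props v S Si).1.
rewrite -mulr_suml -natr_sum.
have -> : (\sum_(Si <- S) nchars Si)%N = nchars (flatten S) by rewrite nchars_flatten sumnE big_map.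
rewrite /omega.
set n := nchars _; set K := (size S * v.+1)%N.
case: (posnP n) => [->|np]; first by rewrite mul0r ler0n.
case: (posnP K) => [->|Kp]; first by rewrite invr0 mulr0 invr0 mulr0.
rewrite invf_div mulrA mulrC mulrA mulVf ?mul1r //.
by rewrite pnatr_eq0 -lt0n.
Qed.

Lemma size_samples_le v S e : (size (samples v S e) <= size S * v.+1)%N.
Proof.
rewrite /samples size_flatten /shape -map_comp.
under eq_map => i do rewrite /= size_cat.
rewrite sumn_mapD.
have -> : sumn [seq size (reg_samples v S (nth [::] S i)) | i <- iota 0 (size S)] =
          sumn [seq size (reg_samples v S Si) | Si <- S].
  by rewrite (map_iota_nth [::] (fun Si => size (reg_samples v S Si))).
have hd : (sumn [seq size (if (i < deficit v S)%N && (nth [::] S i != [::]) then [:: e i] else [::])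
              | i <- iota 0 (size S)] <= deficit v S)%N.
  apply: leq_trans (count_lt_iota (deficit v S) (size S)).
  elim: (iota 0 (size S)) => [|i l IH] //=; apply: leq_add IH.
  by case: (i < _)%N; case: (_ != _).
have := R_le v S; move: hd; rewrite /deficit => h1 h2.
apply: leq_trans (leq_add (leqnn _) h1) _; lia.
Qed.

Local Close Scope ring_scope.


Lemma window_arith r j m Q a1 a2 : 0 < r -> j < r -> m <= r * Q ->
  a1 * r <= j * m -> j * m < a1.+1 * r ->
  a2 * r <= j.+1 * m -> j.+1 * m < a2.+1 * r ->
  (if j.+1 == r then m else a2.-1) - (if j == 0 then 0 else a1.-1.+1) <= Q.
Proof.
move=> r0 jr mQ h1 h1' h2 h2'.
case: eqP => [jr1|jn]; case: eqP => [j0|j0].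
- subst; nia.
- subst; nia.
- subst; nia.
- nia.
Qed.

Lemma count_iota_sub (a b : pred nat) m :
  (forall i, i < m -> a i -> b i) -> count a (iota 0 m) <= count b (iota 0 m).
Proof.
move=> H; rewrite -!size_filter; apply: uniq_leq_size.
  by apply: filter_uniq; apply: iota_uniq.
move=> i; rewrite !mem_filter mem_iota /= add0n => /andP[ai im].
by rewrite im (H _ im ai).
Qed.

Lemma count_window_iota L0 U0 m :
  count (fun i => L0 <= i < U0) (iota 0 m) <= U0 - L0.
Proof.
rewrite -size_filter; apply: (@leq_trans (size (iota L0 (U0 - L0)))); last by rewrite size_iota.
apply: uniq_leq_size; first by apply: filter_uniq; apply: iota_uniq.
move=> i; rewrite mem_filter !mem_iota /= => /andP[/andP[h1 h2] _].
apply/andP; split => //; lia.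
Qed.

Lemma count_window (V : seq string) r j Q (P : pred string) :
  sorted str_le V -> 0 < r -> j < r -> size V <= r * Q ->
  (forall s, P s -> (j == 0) || str_lt (nth [::] V ((j * size V) %/ r).-1) s) ->
  (forall s, P s -> (j.+1 == r) || str_lt s (nth [::] V ((j.+1 * size V) %/ r).-1)) ->
  count P V <= Q.
Proof.
move=> srt r0 jr mQ Hl Hu.
have E := mkseq_nth [::] V; rewrite /mkseq in E.
rewrite -[V in count P V]E count_map.
have hom := sorted_leq_nth str_le_trans str_le_refl [::] srt.
set m := size V in mQ Hl Hu E hom *.
set a1 := (j * m) %/ r in Hl *; set a2 := (j.+1 * m) %/ r in Hu *.
have f1 : a1 * r <= j * m by apply: leq_divM.
have f1' : j * m < a1.+1 * r by apply: ltn_ceil.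
have f2 : a2 * r <= j.+1 * m by apply: leq_divM.
have f2' : j.+1 * m < a2.+1 * r by apply: ltn_ceil.
have a1m : a1 <= m by nia.
have a2m : a2 <= m by nia.
clearbody a1 a2.
apply: leq_trans (count_iota_sub (b := fun i => (if j == 0 then 0 else a1.-1.+1) <= i <
   (if j.+1 == r then m else a2.-1)) _) _.
  move=> i im /= Pi; apply/andP; split.
    case: eqP => [//|/eqP jn]; move: (Hl _ Pi); rewrite (negbTE jn) /= => hlt.
    rewrite ltnNge; apply/negP => hle.
    have ha : a1.-1 < m by lia.
    have := hom i a1.-1; rewrite !inE => /(_ im) /(_ ha) /(_ hle).
    by rewrite str_ltNge in hlt; rewrite (negbTE hlt).
  case: eqP => [//|/eqP jn]; move: (Hu _ Pi); rewrite (negbTE jn) /= => hlt.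
  rewrite ltnNge; apply/negP => hle.
  have ha : a2.-1 < m by lia.
  have := hom a2.-1 i; rewrite !inE => /(_ ha) /(_ im) /(_ hle).
  by rewrite str_ltNge in hlt; rewrite (negbTE hlt).
apply: leq_trans (count_window_iota _ _ _) _.
exact: window_arith.
Qed.

Local Close Scope ring_scope.


Lemma sumn_map1 T (L : seq T) : sumn (map (fun _ => 1) L) = size L.
Proof. by elim: L => //= x L ->. Qed.

Lemma nchars_le_flatten Si S : Si \in S -> nchars Si <= nchars (flatten S).
Proof.
elim: S => [|X S IH] //=; rewrite inE nchars_cat => /orP[/eqP ->|h].
  exact: leq_addr.
by apply: leq_trans (IH h) _; apply: leq_addl.
Qed.

Local Open Scope ring_scope.

Lemma level v r S e j lh :
  (0 < r)%N -> (0 < size S)%N -> (r %| size S)%N -> (j < r)%N ->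
  all (sorted str_le) S -> uniq (flatten S) ->
  (forall s, s \in flatten S -> size s <= lh)%N ->
  ((nchars (bucket v r S e j))%:R : rat) <=
    (nchars (flatten S))%:R / r%:R + (nchars (flatten S))%:R / (v.+1)%:R + lh%:R.
Proof.
move=> r0 p0 rp jr srtS uS hlh.
rewrite /bucket.
set f0 := splitter v r S e j; set f1 := splitter v r S e j.+1.
set P := fun s => ((j == 0) || str_lt f0 s) && ((j.+1 == r) || str_lt s f1).
have cvx : forall x y z, P x -> P z -> str_le x y -> str_le y z -> P y.
  move=> x y z /andP[hx _] /andP[_ hz] xy yz; apply/andP; split.
    by case/orP: hx => [->//|h]; rewrite (str_lt_le_trans h xy) orbT.
  by case/orP: hz => [->//|h]; rewrite (str_le_lt_trans yz h) orbT.
set n := nchars (flatten S).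
have Hb : (nchars [seq s <- flatten S | ((j == 0) || str_lt f0 s) && ((j.+1 == r) || str_le s f1)]
           <= nchars (filter P (flatten S)) + nchars (filter (pred1 f1) (flatten S)))%N.
  apply: leq_trans (nchars_filter_or P (pred1 f1) _).
  apply: nchars_filter_sub => s /andP[hl hu]; rewrite /P hl /=.
  case/orP: hu => [->//|]; rewrite str_le_eqVlt => /orP[->|->]; by rewrite ?orbT.
have H1 : (nchars (filter (pred1 f1) (flatten S)) <= lh)%N.
  case: (boolP (f1 \in flatten S)) => hin.
    by rewrite filter_pred1_uniq // nchars_cons addn0; apply: hlh.
  have -> : filter (pred1 f1) (flatten S) = [::].
    apply/eqP/negPn; rewrite -has_filter; apply/negP => /hasP [x xin /= /eqP xE].
    by move: hin; rewrite -xE xin.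
  by [].
set w := omega v S.
have w0 : 0 <= w by apply: omega_ge0.
have Hper : forall Si, Si \in S ->
    (nchars (filter P Si))%:R <= w * ((count P (reg_samples v S Si) + 1)%N)%:R.
  move=> Si SiS.
  have srt : sorted str_le Si by apply: (allP srtS).
  case: (posnP (nchars Si)) => [T0|Tp].
    have -> : nchars (filter P Si) = 0%N.
      by apply/eqP; rewrite -leqn0 -T0; apply: nchars_filter_le.
    by rewrite mulr_ge0.
  have np : (0 < n)%N by apply: leq_trans Tp (nchars_le_flatten SiS).
  have wp : 0 < w by rewrite /w /omega divr_gt0 // ltr0n // muln_gt0 p0.
  have [_ hc] := ncuts_props v S Si; rewrite -/w in hc.
  have hx : 0 < (nchars Si)%:R / w by rewrite divr_gt0 // ltr0n.
  have c0 : (0 < ncuts v S Si)%N by rewrite -(ltr_nat rat); apply: lt_le_trans hc.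
  have hw : (nchars Si)%:R / (ncuts v S Si)%:R <= w.
    rewrite ler_pdivrMr ?ltr0n // mulrC -ler_pdivrMr //.
  rewrite natrD.
  exact: (pe_bound srt cvx c0 hw).
set Q := ((size S * v.+1) %/ r)%N.
have rQ : (r * Q = size S * v.+1)%N by rewrite mulnC divnK // dvdn_mulr.
have Hcnt : (sumn [seq count P (reg_samples v S Si) | Si <- S] <= Q)%N.
  apply: (@leq_trans (count P (samples v S e))).
    rewrite /samples count_flatten -map_comp -(map_iota_nth [::] (fun Si => count P (reg_samples v S Si))).
    apply: sumn_map_le => i /=; rewrite count_cat; exact: leq_addr.
  have -> : count P (samples v S e) = count P (sort str_le (samples v S e)).
    have hp : perm_eq (sort str_le (samples v S e)) (samples v S e) by rewrite perm_sort.
    by move/permP: hp => ->.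
  apply: (@count_window _ r j Q P) => //.
  - by apply: sort_sorted; apply: str_le_total.
  - by rewrite size_sort rQ; apply: size_samples_le.
  - by move=> s /andP[].
  - by move=> s /andP[].
apply: le_trans (_ : ((nchars (filter P (flatten S)) + nchars (filter (pred1 f1) (flatten S)))%N)%:R <= _).
  by rewrite ler_nat.
rewrite natrD; apply: lerD; last by rewrite ler_nat.
have HP : (nchars (filter P (flatten S)))%:R <= w * ((Q + size S)%N)%:R.
  rewrite nchars_filter_flatten.
  apply: le_trans (sumn_le_big Hper) _.
  rewrite -mulr_sumr -natr_sum; apply: ler_wpM2l => //; rewrite ler_nat.
  have -> : (\sum_(Si <- S) (count P (reg_samples v S Si) + 1))%N =
            sumn (map (fun Si => count P (reg_samples v S Si) + 1)%N S) by rewrite sumnE big_map.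
  by rewrite sumn_mapD sumn_map1 leq_add2r.
apply: le_trans HP _.
rewrite natrD /Q natf_div ?dvdn_mulr // /w /omega -/n.
have hr : (r%:R : rat) != 0 by rewrite pnatr_eq0 -lt0n.
have hp : ((size S)%:R : rat) != 0 by rewrite pnatr_eq0 -lt0n.
have hv : ((v.+1)%:R : rat) != 0 by rewrite pnatr_eq0.
rewrite natrM le_eqVlt; apply/orP; left; apply/eqP; field.
by rewrite hr hp; move: hv; rewrite -natr1 addrC => ->.
Qed.

Local Close Scope ring_scope.

Local Open Scope ring_scope.

Definition Fb (r v N p lh t : nat) : rat :=
  (1 + r%:R / v%:R) ^+ t *
    (N%:R / (r ^ t)%:R
     + t%:R * (1 + (v%:R + 1) / r%:R) * (p%:R / (r ^ t.-1)%:R) * lh%:R).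

Lemma Fb0 r v N p lh : Fb r v N p lh 0 = N%:R.
Proof. by rewrite /Fb expr0 mul1r expn0 divr1 mul0r !mul0r addr0. Qed.

Lemma Fb_eq r v N p lh t : (0 < r)%N -> (0 < v)%N -> (0 < t)%N ->
  Fb r v N p lh t = Fb r v N p lh t.-1 * (1 + r%:R / v%:R) / r%:R
    + (1 + r%:R / v%:R) ^+ t * (1 + (v%:R + 1) / r%:R) * (p%:R / (r ^ t.-1)%:R) * lh%:R.
Proof.
move=> r0 v0.
have hr : (r%:R : rat) != 0 by rewrite pnatr_eq0 -lt0n.
have hv : (v%:R : rat) != 0 by rewrite pnatr_eq0 -lt0n.
case: t => [//|[|s]] _.
  rewrite Fb0 /Fb /= expn0 expn1 !expr1.
  by field; rewrite hr hv.
rewrite /Fb !natrX /= !exprS.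
have hrs : (r%:R : rat) ^+ s != 0 by rewrite expf_neq0.
set a := 1 + _; set A := a ^+ s; set R := r%:R ^+ s.
by field; rewrite hrs hr.
Qed.

Lemma Fb_step r v N p lh k t (n : rat) : (0 < r)%N -> (0 < v)%N -> p = (r ^ k)%N ->
  (1 <= t <= k)%N -> 0 <= n -> n <= Fb r v N p lh t.-1 ->
  n / r%:R + n / (v.+1)%:R + lh%:R <= Fb r v N p lh t.
Proof.
move=> r0 v0 pE /andP[t1 tk] n0 hn.
rewrite (@Fb_eq r v N p lh t r0 v0 t1).
have hr : (r%:R : rat) != 0 by rewrite pnatr_eq0 -lt0n.
have hv : (v%:R : rat) != 0 by rewrite pnatr_eq0 -lt0n.
have rp : (0 : rat) < r%:R by rewrite ltr0n.
have vp : (0 : rat) < v%:R by rewrite ltr0n.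
set a := 1 + r%:R / v%:R.
have a1 : 1 <= a by rewrite /a lerDl divr_ge0 // ltW.
have h1 : n / r%:R + n / (v.+1)%:R <= n * a / r%:R.
  have -> : n * a / r%:R = n / r%:R + n / v%:R by rewrite /a; field; rewrite ?hr ?hv.
  rewrite lerD2l ler_pdivrMr ?ltr0n //.
  have -> : n / v%:R * (v.+1)%:R = n + n / v%:R by rewrite -natr1; field; rewrite ?hr ?hv.
  by rewrite lerDl divr_ge0 // ltW.
have h2 : n * a / r%:R <= Fb r v N p lh t.-1 * a / r%:R.
  have ar : 0 <= a / r%:R by apply: divr_ge0; [lra | exact: ltW].
  by move: (ler_wpM2r ar hn); rewrite !mulrA.
have h3 : lh%:R <= a ^+ t * (1 + (v%:R + 1) / r%:R) * (p%:R / (r ^ t.-1)%:R) * lh%:R.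
  apply: ler_peMl; first by apply: ler0n.
  apply: mulr_ege1; first apply: mulr_ege1.
  - exact: exprn_ege1.
  - by rewrite lerDl divr_ge0 // ?ltW //; lra.
  - rewrite ler_pdivlMr ?ltr0n ?expn_gt0 ?r0 // mul1r ler_nat pE.
    apply: leq_pexp2l => //; lia.
apply: lerD; [exact: le_trans h1 h2 | exact: h3].
Qed.

Local Close Scope ring_scope.


Lemma perm_flatten_sort (inp : seq (seq string)) :
  perm_eq (flatten [seq sort str_le s | s <- inp]) (flatten inp).
Proof.
elim: inp => [|s inp IH] //=; apply: perm_cat => //; by rewrite perm_sort.
Qed.

Local Open Scope ring_scope.

Lemma invariant (v r k : nat) inp t S :
  (0 < r)%N -> (0 < v)%N -> size inp = (r ^ k)%N -> uniq (flatten inp) ->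
  mlevel_group v r k inp t S ->
  [/\ (1 <= t <= k.+1)%N /\ ((t <= k)%N -> size S = (r ^ (k.+1 - t))%N),
      all (sorted str_le) S, uniq (flatten S),
      {subset flatten S <= flatten inp} &
      (nchars (flatten S))%:R <=
        Fb r v (nchars (flatten inp)) (r ^ k) (\max_(s <- flatten inp) size s) t.-1].
Proof.
move=> r0 v0 hsz uinp H; elim: H => [|t0 S0 e j C _ [[ht hsize] srt uS sub hn] tk eok jr hC srtC pC].
  have hp := perm_flatten_sort inp.
  split => //.
  - split; first by move: (ltn0Sn k); lia.
    by move=> _; rewrite size_map hsz subn1.
  - by apply/allP => s /mapP [x _ ->]; apply: sort_sorted; apply: str_le_total.
  - by rewrite (perm_uniq hp).
  - by move=> s; rewrite (perm_mem hp).
  - by rewrite Fb0 (nchars_perm hp).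
have hS : size S0 = (r ^ (k - t0).+1)%N by rewrite (hsize (ltnW tk)) subSn // ltnW.
have hbuc : {subset bucket v r S0 e j <= flatten S0}.
  by move=> s; rewrite /bucket mem_filter => /andP[].
split => //.
- split; first by move: ht tk; lia.
  by move=> _; rewrite hC hS expnS mulKn // subSS.
- rewrite (perm_uniq pC); exact: filter_uniq.
- by move=> s; rewrite (perm_mem pC) => /hbuc /sub.
rewrite (nchars_perm pC) /=.
have hlev := @level v r S0 e j (\max_(s <- flatten inp) size s) r0.
apply: le_trans (hlev _ _ jr srt uS _) _.
- by rewrite hS expn_gt0 r0.
- by rewrite hS expnS dvdn_mulr.
- by move=> s /sub sin; apply: leq_bigmax_seq.
apply: (@Fb_step r v _ _ _ k t0) => //.
- by move: ht tk; lia.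
Qed.


Local Close Scope ring_scope.
Unset Implicit Arguments.
Theorem lemma4 (p k r v : nat) (inp : seq (seq string)) :
  (1 <= k)%N -> (0 < r)%N -> p = (r ^ k)%N -> (0 < v)%N ->
  size inp = p ->
  uniq (flatten inp) ->
  let N := nchars (flatten inp) in
  let lhat := (\max_(s <- flatten inp) size s)%N in
  forall (t : nat) (S : seq (seq string)) (e : nat -> string) (j : nat),
    (1 <= t <= k)%N ->
    mlevel_group v r k inp t S ->
    extra_ok S e ->
    (j < r)%N ->
    (((nchars (bucket v r S e j))%:R : rat)
      <= (1 + r%:R / v%:R) ^+ t *
         (N%:R / (r ^ t)%:R
          + t%:R * (1 + (v%:R + 1) / r%:R) * (p%:R / (r ^ t.-1)%:R) * lhat%:R))%R.
Proof.
move=> k1 r0 pE v0 hsz uinp N lhat t S e j ht H eok jr.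
have [[_ hsize] srt uS sub hn] := invariant r0 v0 (etrans hsz pE) uinp H.
have /andP[t1 tk] := ht.
have hS : size S = (r ^ (k - t).+1)%N by rewrite (hsize tk) subSn.
apply: le_trans (@level v r S e j lhat r0 _ _ jr srt uS _) _.
- by rewrite hS expn_gt0 r0.
- by rewrite hS expnS dvdn_mulr.
- by move=> s /sub sin; apply: leq_bigmax_seq.
have := @Fb_step r v N p lhat k t (nchars (flatten S))%:R r0 v0 pE ht (ler0n _ _).
rewrite -pE in hn; move=> /(_ hn).
by rewrite /Fb.
Qed.
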